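(* Let $a<b$ be real numbers, let $f:[a,b]\to\mathbb{R}$, and let $c\in\left[a,\frac{a+b}{2}\right]$ be such that: (i) $f(c-x)+f(c+x)=2f(c)$ whenever $c\pm x\in[a,b]$; (ii) the restriction $f|_{[c,b]}$ is convex. Then \[ f(b_\mu)\le\int_a^b f(x)\,d\mu(x) \] for every Borel probability measure $\mu$ on $[a,b]$ whose barycenter $b_\mu=\int_a^b x\,d\mu(x)$ lies in the interval $[2c-a,b]$. Moreover, if in (ii) the restriction $f|_{[c,b]}$ is instead assumed concave (with (i) unchanged), then the reverse inequality $f(b_\mu)\ge\int_a^b f(x)\,d\mu(x)$ holds for every such $\mu$.
   Context: For a Borel probability measure $\mu$ on $[a,b]$, its barycenter is $b_\mu=\int_a^b x\,d\mu(x)$. *)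

(* Defs.v *)
From HB Require Import structures.
From mathcomp Require Import all_boot all_order all_algebra.
From mathcomp Require Import all_classical all_reals all_analysis.
Set Implicit Arguments. Unset Strict Implicit. Unset Printing Implicit Defensive.
Import Order.TTheory GRing.Theory Num.Theory.
Local Open Scope classical_set_scope.
Local Open Scope ring_scope.

Definition convex_on (R : realType) (f : R -> R) (c b : R) : Prop :=
  forall x y t : R, c <= x <= b -> c <= y <= b -> 0 <= t <= 1 ->
    f (t * x + (1 - t) * y) <= t * f x + (1 - t) * f y.

Definition concave_on (R : realType) (f : R -> R) (c b : R) : Prop :=
  forall x y t : R, c <= x <= b -> c <= y <= b -> 0 <= t <= 1 ->
    t * f x + (1 - t) * f y <= f (t * x + (1 - t) * y).

Definition point_symmetric (R : realType) (f : R -> R) (a b c : R) : Prop :=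
  forall x : R, a <= c - x <= b -> a <= c + x <= b ->
    f (c - x) + f (c + x) = 2 * f c.

Definition barycenter (R : realType) (mu : probability R R) (a b : R) : R :=
  fine (\int[mu]_(x in `[a, b]) (x%:E))%E.

(* Main.v *)
Require Import Defs.
From HB Require Import structures.
From mathcomp Require Import all_boot all_order all_algebra.
From mathcomp Require Import all_classical all_reals all_analysis.
From mathcomp Require Import measurable_realfun.
From mathcomp Require Import ring lra.
Import Order.TTheory GRing.Theory Num.Theory.
Local Open Scope classical_set_scope.
Local Open Scope ring_scope.

Lemma le_integral_gen d (T : measurableType d) (R : realType)
  (mu : {measure set T -> \bar R}) (D : set T) (f g : T -> \bar R) :
  (forall x, D x -> (f x <= g x)%E) ->
  (\int[mu]_(x in D) f x <= \int[mu]_(x in D) g x)%E.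
Proof.
move=> fg; rewrite /integral; apply: leeB.
  apply: ereal_sup_le => _ [h hf <-]; exists h => //= x.
  apply: (le_trans (hf x)); apply: (@funepos_le _ _ setT) => //; last by rewrite in_setT.
  move=> y _; rewrite /patch; case: ifP => // /set_mem Dy; exact: fg.
apply: ereal_sup_le => _ [h hf <-]; exists h => //= x.
apply: (le_trans (hf x)); apply: (@funeneg_le _ _ setT) => //; last by rewrite in_setT.
move=> y _; rewrite /patch; case: ifP => // /set_mem Dy; exact: fg.
Qed.

Section integ.
Context (R : realType) (a b : R) (mu : probability R R).
Hypothesis Hmu : mu [set` `[a, b]] = 1%E.

Let mD : measurable [set` `[a, b]]. Proof. exact: measurable_itv. Qed.

Lemma intg_id : mu.-integrable [set` `[a, b]] (EFin \o id).
Proof.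
apply: measurable_bounded_integrable => //.
- by apply: (le_lt_trans (probability_le1 mu mD)); exact: ltry.
- have := compact_bounded (@segment_compact R a b).
  done.
Qed.

Lemma intg_cst (r : R) : mu.-integrable [set` `[a, b]] (fun _ => r%:E).
Proof.
apply: (@measurable_bounded_integrable _ _ _ _ (cst r)) => //.
- by apply: (le_lt_trans (probability_le1 mu mD)); exact: ltry.
- exact: bounded_cst.
Qed.

Lemma int_id : (\int[mu]_(x in `[a, b]) x%:E)%E = (barycenter mu a b)%:E.
Proof.
rewrite /barycenter fineK //.
exact: (integrable_fin_num mD intg_id).
Qed.

Lemma int_affine (al k p : R) :
  (\int[mu]_(x in `[a, b]) (al + k * (x - p))%:E)%E =
  (al + k * (barycenter mu a b - p))%:E.
Proof.
transitivity (\int[mu]_(x in `[a, b]) ((fun _ => (al - k * p)%:E) x + k%:E * (EFin \o id) x))%E.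
  by apply: eq_integral => x _ /=; rewrite -EFinM -EFinD; congr EFin; ring.
rewrite integralD //; last by apply: integrableZl => //; exact: intg_id.
  2: exact: intg_cst.
rewrite integralZl //; last exact: intg_id.
rewrite integral_cst // [X in (_ * X)%E](_ : _ = 1%E) ?mule1; last exact: Hmu.
have -> : (\int[mu]_(x in `[a, b]) (EFin \o id) x)%E = (barycenter mu a b)%:E by exact: int_id.
by rewrite -EFinM -EFinD; congr EFin; ring.
Qed.

Lemma endpoint (e s r : R) (v : \bar R) :
  barycenter mu a b = e -> s != 0 ->
  (forall x, a <= x <= b -> 0 <= s * (x - e)) ->
  (\int[mu]_(x in `[a, b]) (if x == e then r%:E else v))%E = r%:E.
Proof.
move=> be s0 hs.
have mg : measurable_fun [set` `[a, b]] (EFin \o (fun x : R => s * (x - e))).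
  apply/(measurable_EFinP _ (fun x : R => s * (x - e))); apply: measurable_funM => //.
  exact: measurable_funB.
have i0 : (\int[mu]_(x in `[a, b]) abse ((s * (x - e))%:E))%E = 0%E.
  transitivity (\int[mu]_(x in `[a, b]) (0 + s * (x - e))%:E)%E.
    apply: eq_integral => x /[1!inE] /= xD. rewrite add0r /= ger0_norm //.
    exact: hs.
  by rewrite int_affine be subrr mulr0 addr0.
have /(ae_eq_integral_abs mu mD mg) := i0.
move=> hae.
have mh : measurable_fun [set` `[a, b]] (fun x : R => if x == e then r%:E else v).
  apply: measurable_fun_if => //.
  exact: measurable_fun_eqr.
rewrite (ae_eq_integral (cst r%:E)) //.
  by rewrite integral_cst // [X in (_ * X)%E](_ : _ = 1%E) ?mule1; last exact: Hmu.
move: hae; apply: filterS => x /= H xD.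
have := H xD => /= /eqP; rewrite eqe mulf_eq0 (negbTE s0) /= subr_eq0 => /eqP ->.
by rewrite eqxx.
Qed.

End integ.
Lemma conv_cross {R : realType} (f : R -> R) (c b u v w : R) :
  convex_on f c b -> c <= u -> w <= b -> u < w -> u <= v -> v <= w ->
  (w - u) * f v <= (w - v) * f u + (v - u) * f w.
Proof.
move=> cf cu wb uw uv vw.
have wu0 : w - u != 0 by rewrite subr_eq0 gt_eqF.
set t := (w - v) / (w - u).
have ht : v = t * u + (1 - t) * w by rewrite /t; field.
have t0 : 0 <= t by rewrite /t divr_ge0 // subr_ge0 // ltW.
have t1 : t <= 1 by rewrite /t ler_pdivrMr ?subr_gt0 //; lra.
have := cf u w t.
rewrite -ht.
have -> : (c <= u <= b) = true by apply/andP; split=> //; lra.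
have -> : (c <= w <= b) = true by apply/andP; split=> //; lra.
rewrite t0 t1 => /(_ isT isT isT) H.
have pos : 0 < w - u by rewrite subr_gt0.
have := ler_wpM2l (ltW pos) H.
have -> : (w - u) * (t * f u + (1 - t) * f w) = (w - v) * f u + (v - u) * f w.
  by rewrite /t; field.
done.
Qed.

Lemma subgrad (R : realType) (a b c p : R) (f : R -> R) :
  a < b -> a <= c -> c <= (a + b) / 2 ->
  point_symmetric f a b c -> convex_on f c b ->
  2 * c - a <= p -> a < p -> p < b ->
  exists k, forall x, a <= x <= b -> f p + k * (x - p) <= f x.
Proof.
move=> ab ac cab ps cf cp ap pb.
have cp' : c < p by lra.
pose S := [set (f p - f y) / (p - y) | y in [set y | c <= y < p]].
have Sne : S !=set0 by exists ((f p - f c) / (p - c)); exists c => //=; rewrite lexx cp'.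
have slope z : p < z -> z <= b -> ubound S ((f z - f p) / (z - p)).
  move=> pz zb _ [y /= /andP [cy yp] <-].
  have := @conv_cross R f c b _ _ _ cf cy zb (lt_trans yp pz) (ltW yp) (ltW pz).
  rewrite ler_pdivrMr ?subr_gt0 // mulrAC ler_pdivlMr ?subr_gt0 // => H.
  nra.
have Sb : has_sup S by split => //; exists ((f b - f p) / (b - p)); exact: slope.
pose k := sup S.
have kR : forall z, p < z -> z <= b -> f p + k * (z - p) <= f z.
  move=> z pz zb; have := ge_sup Sne (slope z pz zb).
  rewrite -/k ler_pdivlMr ?subr_gt0 // => H; lra.
have kL : forall y, c <= y -> y < p -> f p + k * (y - p) <= f y.
  move=> y cy yp.
  have : (f p - f y) / (p - y) <= k.
    apply: sup_ubound; first by case: Sb.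
    by exists y => //=; rewrite cy yp.
  rewrite ler_pdivrMr ?subr_gt0 // => H; lra.
have kC : forall y, c <= y <= b -> f p + k * (y - p) <= f y.
  move=> y /andP [cy yb]; have [yp|py|->] := ltgtP y p.
  - exact: kL.
  - exact: kR.
  - lra.
exists k => x /andP [ax xb].
have [cx|xc] := leP c x; first by apply: kC; rewrite cx xb.
pose y := 2 * c - x.
have hs := ps (c - x).
have e1 : c - (c - x) = x by lra.
have e2 : c + (c - x) = y by rewrite /y; lra.
rewrite e1 e2 in hs.
have := hs; rewrite ax /=.
have -> : (x <= b) = true by [].
have -> : (a <= y <= b) = true by apply/andP; rewrite /y; split; lra.
move=> /(_ isT isT) Hs.
have hc := kC c; rewrite lexx /= in hc.
have {hc} hc := hc ltac:(lra).
have [yp|py] := leP y p; last by exfalso; rewrite /y in py; lra.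
have Hch := @conv_cross R f c b _ _ _ cf (lexx c) (ltW pb) cp' (ltW (_ : c < y)) yp.
have cy : c < y by rewrite /y; lra.
have {Hch} := Hch cy.
have pos : 0 < p - c by lra.
have pyc : 0 <= p + y - 2 * c by rewrite /y; lra.
move=> Hch.
have : (p + y - 2 * c) * f p <= (p + y - 2 * c) * (f c + k * (p - c)).
  by apply: ler_wpM2l => //; lra.
move=> H2.
have : (p - c) * f y <= (p - c) * (2 * f c - f p - k * (x - p)).
  rewrite /y in Hch H2 *; nra.
rewrite ler_pM2l // => H3.
lra.
Qed.
Lemma main_cvx (R : realType) (a b c : R) (f : R -> R) (mu : probability R R) :
  a < b -> a <= c <= (a + b) / 2 ->
  point_symmetric f a b c -> convex_on f c b ->
  mu [set` `[a, b]] = 1%E ->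
  2 * c - a <= barycenter mu a b <= b ->
  ((f (barycenter mu a b))%:E <= \int[mu]_(x in `[a, b]) (f x)%:E)%E.
Proof.
move=> ab /andP [ac cab] ps cf Hmu /andP [cp pb].
set p := barycenter mu a b in cp pb *.
have ap : a <= p by lra.
have [pb'|pbe] := ltP p b; last first.
  have pe : p = b by apply/eqP; rewrite eq_le pb pbe.
  have E := @endpoint R a b mu Hmu b (-1) (f p) -oo%E pe.
  rewrite -{1}E; last 2 first.
  - by apply/negP => /eqP; lra.
  - by move=> x /andP [_ xb]; lra.
  apply: le_integral_gen => x _.
  by case: eqP => [->|_]; [rewrite pe|exact: leNye].
have [ap'|ape] := ltP a p; last first.
  have pe : p = a by apply/eqP; rewrite eq_le ape ap.
  have E := @endpoint R a b mu Hmu a 1 (f p) -oo%E pe.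
  rewrite -{1}E; last 2 first.
  - exact: oner_neq0.
  - by move=> x /andP [ax _]; lra.
  apply: le_integral_gen => x _.
  by case: eqP => [->|_]; [rewrite pe|exact: leNye].
have [k hk] := @subgrad R a b c p f ab ac cab ps cf cp ap' pb'.
have -> : (f p)%:E = (\int[mu]_(x in `[a, b]) (f p + k * (x - p))%:E)%E.
  by rewrite (@int_affine R a b mu Hmu) -/p subrr mulr0 addr0.
apply: le_integral_gen => x /= xD; rewrite lee_fin; apply: hk.
by move: xD; rewrite /= in_itv.
Qed.

Lemma main_ccv (R : realType) (a b c : R) (f : R -> R) (mu : probability R R) :
  a < b -> a <= c <= (a + b) / 2 ->
  point_symmetric f a b c -> concave_on f c b ->
  mu [set` `[a, b]] = 1%E ->
  2 * c - a <= barycenter mu a b <= b ->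
  (\int[mu]_(x in `[a, b]) (f x)%:E <= (f (barycenter mu a b))%:E)%E.
Proof.
move=> ab /andP [ac cab] ps cf Hmu /andP [cp pb].
have cg : convex_on (fun x => - f x) c b.
  move=> x y t hx hy ht; have := cf x y t hx hy ht; lra.
have pg : point_symmetric (fun x => - f x) a b c.
  move=> x h1 h2; have := ps x h1 h2; lra.
set p := barycenter mu a b in cp pb *.
have ap : a <= p by lra.
have [pb'|pbe] := ltP p b; last first.
  have pe : p = b by apply/eqP; rewrite eq_le pb pbe.
  have E := @endpoint R a b mu Hmu b (-1) (f p) +oo%E pe.
  rewrite -[X in (_ <= X)%E]E; last 2 first.
  - by apply/negP => /eqP; lra.
  - by move=> x /andP [_ xb]; lra.
  apply: le_integral_gen => x _.
  by case: eqP => [->|_]; [rewrite pe|exact: leey].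
have [ap'|ape] := ltP a p; last first.
  have pe : p = a by apply/eqP; rewrite eq_le ape ap.
  have E := @endpoint R a b mu Hmu a 1 (f p) +oo%E pe.
  rewrite -[X in (_ <= X)%E]E; last 2 first.
  - exact: oner_neq0.
  - by move=> x /andP [ax _]; lra.
  apply: le_integral_gen => x _.
  by case: eqP => [->|_]; [rewrite pe|exact: leey].
have [k hk] := @subgrad R a b c p (fun x => - f x) ab ac cab pg cg cp ap' pb'.
have -> : (f p)%:E = (\int[mu]_(x in `[a, b]) (f p + (- k) * (x - p))%:E)%E.
  by rewrite (@int_affine R a b mu Hmu) -/p subrr mulr0 addr0.
apply: le_integral_gen => x /= xD; rewrite lee_fin.
move: xD; rewrite /= in_itv /= => xD; have := hk x xD; lra.
Qed.

Theorem theorem1 (R : realType) (a b c : R) (f : R -> R) :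
  a < b -> a <= c <= (a + b) / 2 ->
  point_symmetric f a b c ->
  (convex_on f c b ->
     forall mu : probability R R, mu [set` `[a, b]] = 1%E ->
       2 * c - a <= barycenter mu a b <= b ->
       ((f (barycenter mu a b))%:E <= \int[mu]_(x in `[a, b]) (f x)%:E)%E) /\
  (concave_on f c b ->
     forall mu : probability R R, mu [set` `[a, b]] = 1%E ->
       2 * c - a <= barycenter mu a b <= b ->
       (\int[mu]_(x in `[a, b]) (f x)%:E <= (f (barycenter mu a b))%:E)%E).
Proof.
move=> ab hc ps; split=> hf mu Hmu hp.
- exact: (@main_cvx R a b c f mu ab hc ps hf Hmu hp).
- exact: (@main_ccv R a b c f mu ab hc ps hf Hmu hp).
Qed.
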